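(* Let $\mathbb{A}$ be a Boolean algebra and $(\mathbb{B},\mu)$ a metric Boolean algebra. Let $(\varphi_n)$ be a sequence in $\mathcal{H}(\mathbb{A},\mathbb{B})$ converging pointwise metric to $\varphi\in\mathcal{H}(\mathbb{A},\mathbb{B})$. If the sequence $(\widehat{\mu}\circ f_{\varphi_n}^{-1})$ of Radon measures on $St(\mathbb{A})$ is uniformly countably additive, then $(\varphi_n)$ converges pointwise Borel metric to $\varphi$.
   Context: A metric Boolean algebra $(\mathbb{B},\mu)$ is a Boolean algebra with a strictly positive finitely additive probability measure $\mu$; $d_\mu(A,B)=\mu(A\triangle B)$. $\mathcal{H}(\mathbb{A},\mathbb{B})$ is the set of homomorphisms $\mathbb{A}\to\mathbb{B}$. Algebras are identified with clopen algebras of their Stone spaces $St(\cdot)$; $\widehat{\mu}$ is the unique Radon extension of $\mu$ to $St(\mathbb{B})$; $f_\varphi\colon St(\mathbb{B})\to St(\mathbb{A})$, $f_\varphi(x)=\varphi^{-1}[x]$. $(\varphi_n)$ converges pointwise metric to $\varphi$ if $d_\mu(\varphi_n(A),\varphi(A))\to0$ for each $A\in\mathbb{A}$; pointwise Borel metric if $\widehat{\mu}(f_{\varphi_n}^{-1}[B]\triangle f_\varphi^{-1}[B])\to0$ for every Borel $B\subseteq St(\mathbb{A})$. A sequence $(\mu_k)$ of Radon measures on a compact space $K$ is uniformly countably additive if for every decreasing sequence $(E_n)$ of Borel subsets of $K$ with $\bigcap_nE_n=\emptyset$ and every $\varepsilon>0$ there is $N$ with $|\mu_k(E_n)|<\varepsilon$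 for all $n\ge N$ and all $k$. *)

(* Defs.v *)
From HB Require Import structures.
From mathcomp Require Import all_boot all_order all_algebra.
From mathcomp Require Import all_classical all_reals all_analysis.
Set Implicit Arguments. Unset Strict Implicit. Unset Printing Implicit Defensive.
Import Order.TTheory GRing.Theory Num.Theory.
Import numFieldNormedType.Exports.
Local Open Scope classical_set_scope.
Local Open Scope ring_scope.

Definition is_bool_hom d d' (A : ctbDistrLatticeType d) (B : ctbDistrLatticeType d')
  (f : A -> B) : Prop :=
  [/\ f Order.bottom = Order.bottom, f Order.top = Order.top,
      (forall a b, f (Order.meet a b) = Order.meet (f a) (f b)),
      (forall a b, f (Order.join a b) = Order.join (f a) (f b)) &
      (forall a, f (Order.compl a) = Order.compl (f a))].

Definition bhom d d' (A : ctbDistrLatticeType d) (B : ctbDistrLatticeType d') :=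
  {f : A -> B | is_bool_hom f}.

Definition hom_fun d d' (A : ctbDistrLatticeType d) (B : ctbDistrLatticeType d')
  (phi : bhom A B) : A -> B := proj1_sig phi.
Coercion hom_fun : bhom >-> Funclass.

Definition symd d (B : ctbDistrLatticeType d) (a b : B) : B :=
  Order.join (Order.diff a b) (Order.diff b a).

Definition metric_ba d (R : realType) (B : ctbDistrLatticeType d) (mu : B -> R) : Prop :=
  [/\ mu Order.bottom = 0,
      (forall b, b <> Order.bottom -> 0 < mu b),
      (forall a b, Order.meet a b = Order.bottom ->
                   mu (Order.join a b) = mu a + mu b) &
      mu Order.top = 1].

Definition d_mu d (R : realType) (B : ctbDistrLatticeType d) (mu : B -> R) (a b : B) : R :=
  mu (symd a b).

Definition is_ultrafilter d (A : ctbDistrLatticeType d) (U : set A) : Prop :=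
  [/\ U Order.top, ~ U Order.bottom,
      (forall a b, U a -> (a <= b)%O -> U b),
      (forall a b, U a -> U b -> U (Order.meet a b)) &
      (forall a, U a \/ U (Order.compl a))].

Definition St d (A : ctbDistrLatticeType d) := {U : set A | is_ultrafilter U}.

Definition clop d (A : ctbDistrLatticeType d) (a : A) : set (St A) :=
  [set x | proj1_sig x a].

Definition stone_open d (A : ctbDistrLatticeType d) (O : set (St A)) : Prop :=
  forall x, O x -> exists a, proj1_sig x a /\ clop a `<=` O.

Definition stone_borel d (A : ctbDistrLatticeType d) : set (set (St A)) :=
  <<s stone_open (A := A) >>.

Definition stone_compact d (A : ctbDistrLatticeType d) (K : set (St A)) : Prop :=
  forall (I : Type) (O : I -> set (St A)), (forall i, stone_open (O i)) ->
    K `<=` \bigcup_i O i ->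
    exists D : set I, finite_set D /\ K `<=` \bigcup_(i in D) O i.

Definition radon_measure d (R : realType) (A : ctbDistrLatticeType d)
  (nu : set (St A) -> R) : Prop :=
  [/\ (forall E, stone_borel E -> 0 <= nu E),
      nu set0 = 0,
      (forall F : nat -> set (St A), (forall n, stone_borel (F n)) ->
         trivIset setT F ->
         (fun n => \sum_(0 <= i < n) nu (F i)) @ \oo --> nu (\bigcup_n F n)) &
      (forall E, stone_borel E -> forall eps : R, 0 < eps ->
         exists K, [/\ stone_compact K, K `<=` E & nu E - eps < nu K])].

Definition radon_extension d (R : realType) (B : ctbDistrLatticeType d)
  (mu : B -> R) (nu : set (St B) -> R) : Prop :=
  radon_measure nu /\ forall b, nu (clop b) = mu b.

(** f_phi : St(B) -> St(A), f_phi(x) = phi^{-1}[x] *)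
Lemma preimage_ultrafilter d d' (A : ctbDistrLatticeType d) (B : ctbDistrLatticeType d')
  (phi : bhom A B) (x : St B) : is_ultrafilter (phi @^-1` proj1_sig x).
Proof.
case: phi => f [f0 f1 fI fU fC]; case: x => U [U1 U0 Uup UI UC] /=.
split => /=.
- by rewrite f1.
- by rewrite f0.
- move=> a b Ua /meet_idPl ab; apply: (Uup _ _ Ua); apply/meet_idPl.
  by rewrite -fI ab.
- by move=> a b Ua Ub; rewrite fI; exact: UI.
- by move=> a; rewrite fC; exact: UC.
Qed.

Definition stone_map d d' (A : ctbDistrLatticeType d) (B : ctbDistrLatticeType d')
  (phi : bhom A B) : St B -> St A :=
  fun x => exist _ (phi @^-1` proj1_sig x) (preimage_ultrafilter phi x).

Definition pushforward_m (R : realType) (X Y : Type) (nu : set X -> R) (f : X -> Y) :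
  set Y -> R := fun S => nu (f @^-1` S).

Definition setSymD (X : Type) (S T : set X) : set X := (S `\` T) `|` (T `\` S).

Definition pw_metric_cvg d d' (R : realType) (A : ctbDistrLatticeType d)
  (B : ctbDistrLatticeType d') (mu : B -> R) (phis : nat -> bhom A B) (phi : bhom A B) : Prop :=
  forall a : A, (fun n => d_mu mu (phis n a) (phi a)) @ \oo --> (0 : R).

Definition pw_borel_metric_cvg d d' (R : realType) (A : ctbDistrLatticeType d)
  (B : ctbDistrLatticeType d') (nu : set (St B) -> R) (phis : nat -> bhom A B)
  (phi : bhom A B) : Prop :=
  forall S : set (St A), stone_borel S ->
    (fun n => nu (setSymD (stone_map (phis n) @^-1` S) (stone_map phi @^-1` S)))
      @ \oo --> (0 : R).

Definition unif_ctbl_additive d (R : realType) (A : ctbDistrLatticeType d)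
  (nus : nat -> set (St A) -> R) : Prop :=
  forall E : nat -> set (St A), (forall n, stone_borel (E n)) ->
    (forall n, E n.+1 `<=` E n) -> \bigcap_n E n = set0 ->
    forall eps : R, 0 < eps -> exists N : nat,
      forall n k, (N <= n)%N -> `|nus k (E n)| < eps.

(* Main.v *)
Require Import Defs.
From mathcomp Require Import all_boot all_order all_algebra.
From mathcomp Require Import all_classical all_reals all_analysis.
Set Implicit Arguments. Unset Strict Implicit. Unset Printing Implicit Defensive.
Import Order.TTheory Order.CTBDistrLatticeTheory GRing.Theory Num.Theory.
Import numFieldNormedType.Exports.
From mathcomp Require Import lra.
Local Open Scope classical_set_scope.

Section Uf.
Context d (X : ctbDistrLatticeType d) (x : St X).
Local Notation U := (proj1_sig x).
Lemma uf_up a b : U a -> (a <= b)%O -> U b.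
Proof. by case: x => V [] /= ? ? H ? ? ?; apply: H. Qed.
Lemma uf_top : U Order.top. Proof. by case: x => V []. Qed.
Lemma uf_bot : ~ U Order.bottom. Proof. by case: x => V []. Qed.
Lemma uf_meet a b : U (Order.meet a b) <-> U a /\ U b.
Proof.
split=> [H|[Ha Hb]]; first by split; (eapply uf_up; [exact: H|]); [exact: leIl|exact: leIr].
by move: Ha Hb; case: x => V [] /= ? ? ? H ? Ha Hb; exact: H.
Qed.
Lemma uf_em a : U a \/ U (Order.compl a). Proof. by case: x => V [] /= ? ? ? ? H; apply: H. Qed.
Lemma uf_compl a : U (Order.compl a) <-> ~ U a.
Proof.
split=> [H Ha|H]; last by case: (uf_em a).
by apply: uf_bot; rewrite -(meetxC a); apply/uf_meet.
Qed.
Lemma uf_join a b : U (Order.join a b) <-> U a \/ U b.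
Proof.
split=> [H|[H|H]]; last 2 first.
- by eapply uf_up; [exact: H|exact: leUl].
- by eapply uf_up; [exact: H|exact: leUr].
apply: contrapT => /not_orP [Ha Hb].
have : U (Order.compl (Order.join a b)) by rewrite complU; apply/uf_meet; split; apply/uf_compl.
by move/uf_compl.
Qed.
Lemma uf_diff a b : U (Order.diff a b) <-> U a /\ ~ U b.
Proof. by rewrite diffE; split => [/uf_meet [? /uf_compl]|[? /uf_compl ?]]//; apply/uf_meet. Qed.
End Uf.

Lemma clop_join d (X : ctbDistrLatticeType d) (a b : X) :
  clop (Order.join a b) = clop a `|` clop b.
Proof. by apply/seteqP; split => x /=; rewrite /clop /= => /uf_join. Qed.

Lemma clop_bot d (X : ctbDistrLatticeType d) : clop (Order.bottom : X) = set0.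
Proof. by apply/seteqP; split => x //=; rewrite /clop /= => /uf_bot. Qed.

Lemma clop_compl d (X : ctbDistrLatticeType d) (a : X) :
  clop (Order.compl a) = ~` clop a.
Proof. by apply/seteqP; split => x /=; rewrite /clop /= => /uf_compl. Qed.

Lemma clop_symd d (X : ctbDistrLatticeType d) (a b : X) :
  clop (symd a b) = setSymD (clop a) (clop b).
Proof.
apply/seteqP; split => x; rewrite /clop /setSymD /symd /=.
  by move/uf_join => [/uf_diff|/uf_diff] H; [left|right].
by move=> [] H; apply/uf_join; [left|right]; apply/uf_diff.
Qed.

Lemma stone_map_clop d d' (A : ctbDistrLatticeType d) (B : ctbDistrLatticeType d')
  (psi : bhom A B) (a : A) : stone_map psi @^-1` clop a = clop (psi a).
Proof. by []. Qed.

Lemma hom_join d d' (A : ctbDistrLatticeType d) (B : ctbDistrLatticeType d')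
  (psi : bhom A B) a b : psi (Order.join a b) = Order.join (psi a) (psi b).
Proof. by case: psi => f [] ? ? ? H ?; apply: H. Qed.
Lemma hom_bot d d' (A : ctbDistrLatticeType d) (B : ctbDistrLatticeType d')
  (psi : bhom A B) : psi Order.bottom = Order.bottom.
Proof. by case: psi => f []. Qed.

Lemma clop_open d (X : ctbDistrLatticeType d) (a : X) : stone_open (clop a).
Proof. by move=> x xa; exists a; split. Qed.

Lemma open0 d (X : ctbDistrLatticeType d) : stone_open (set0 : set (St X)).
Proof. by move=> x. Qed.

Lemma cover_clop d (X : ctbDistrLatticeType d) (K : set (St X)) (P : X -> Prop) :
  stone_compact K -> K `<=` \bigcup_(a in P) clop a -> P Order.bottom ->
  (forall a b, P a -> P b -> P (Order.join a b)) -> exists c, P c /\ K `<=` clop c.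
Proof.
move=> cK KP P0 PU.
pose O a := if pselect (P a) then clop a else set0.
have Oo : forall a, stone_open (O a).
  by move=> a; rewrite /O; case: (pselect (P a)) => ? /=; [exact: clop_open|exact: open0].
have KO : K `<=` \bigcup_i O i.
  move=> x Kx; have [a Pa xa] := KP x Kx; exists a => //; rewrite /O; case: (pselect (P _)) => //=.
have [D [/finite_seqP [s ->] KD]] := cK X O Oo KO.
suff [c [Pc Hc]] : exists c, P c /\ \bigcup_(i in [set` s]) O i `<=` clop c.
  by exists c; split=> //; exact: subset_trans KD Hc.
clear KD KO; elim: s => [|a s [c [Pc Hc]]].
  by exists Order.bottom; split=> // x [i].
case: (pselect (P a)) => Pa.
  exists (Order.join a c); split; first exact: PU.
  move=> x [i /=]; rewrite inE => /orP [/eqP ->|si] Oix; rewrite clop_join.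
    by left; move: Oix; rewrite /O; case: (pselect (P _)) => //=.
  by right; apply: Hc; exists i.
exists c; split=> // x [i /=]; rewrite inE => /orP [/eqP ->|si] Oix.
  by move: Oix; rewrite /O; case: (pselect (P _)) => //=.
by apply: Hc; exists i.
Qed.

Lemma St_eq d (X : ctbDistrLatticeType d) (x y : St X) :
  (forall b, proj1_sig y b -> proj1_sig x b) -> y = x.
Proof.
move=> H.
have E : proj1_sig y = proj1_sig x.
  apply/funext => b; apply/propext; split; first exact: H.
  move=> xb; apply: contrapT => nyb.
  have /uf_compl : proj1_sig x (Order.compl b) by apply: H; apply/uf_compl.
  by [].
clear H; move: E; case: x => V Vu; case: y => W Wu /= E; subst.
by congr exist; exact: Prop_irrelevance.
Qed.

Lemma compact_closed d (X : ctbDistrLatticeType d) (K : set (St X)) :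
  stone_compact K -> stone_open (~` K).
Proof.
move=> cK x nKx.
have cov : K `<=` \bigcup_(a in fun b => ~ proj1_sig x b) clop a.
  move=> y Ky; apply: contrapT => H.
  have yx : y = x.
    apply: St_eq => b yb; apply: contrapT => nxb; apply: H; exists b => //.
  by apply: nKx; rewrite -yx.
have [c [Pc Kc]] := cover_clop cK cov (@uf_bot _ _ x)
  (fun a b na nb => ltac:(by move/uf_join => [])).
exists (Order.compl c); split; first exact/uf_compl.
by move=> z /uf_compl nzc Kz; apply: nzc; apply: Kc.
Qed.

Section Borel.
Context d (X : ctbDistrLatticeType d).
Implicit Types S T : set (St X).
Lemma borel_sa : sigma_algebra setT (@stone_borel d X).
Proof. exact: smallest_sigma_algebra. Qed.
Lemma borel_open S : stone_open S -> stone_borel S.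
Proof. exact: sub_sigma_algebra. Qed.
Lemma borel0 : stone_borel (set0 : set (St X)).
Proof. by case: borel_sa. Qed.
Lemma borelC S : stone_borel S -> stone_borel (~` S).
Proof. by case: borel_sa => _ H _ /H; rewrite setTD. Qed.
Lemma borel_bigcup (F : nat -> set (St X)) : (forall n, stone_borel (F n)) ->
  stone_borel (\bigcup_n F n).
Proof. by case: borel_sa => _ _ H /H. Qed.
Lemma borelU S T : stone_borel S -> stone_borel T -> stone_borel (S `|` T).
Proof.
move=> bS bT; rewrite -bigcup2E; apply: borel_bigcup => -[|[|n]] //=.
exact: borel0.
Qed.
Lemma borelI S T : stone_borel S -> stone_borel T -> stone_borel (S `&` T).
Proof.
move=> bS bT; rewrite -(setCK (S `&` T)) setCI.
by apply: borelC; apply: borelU; apply: borelC.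
Qed.
Lemma borelD S T : stone_borel S -> stone_borel T -> stone_borel (S `\` T).
Proof. by move=> bS bT; rewrite setDE; apply: borelI => //; apply: borelC. Qed.
Lemma borel_clop (a : X) : stone_borel (clop a).
Proof. by apply: borel_open; exact: clop_open. Qed.
Lemma borel_compact (K : set (St X)) : stone_compact K -> stone_borel K.
Proof. by move=> /compact_closed/borel_open/borelC; rewrite setCK. Qed.
End Borel.

Lemma open_pre d d' (A : ctbDistrLatticeType d) (B : ctbDistrLatticeType d')
  (psi : bhom A B) (O : set (St A)) : stone_open O -> stone_open (stone_map psi @^-1` O).
Proof.
move=> oO x /oO [a [xa aO]]; exists (psi a); split => // y ya.
exact: aO.
Qed.

Lemma borel_pre d d' (A : ctbDistrLatticeType d) (B : ctbDistrLatticeType d')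
  (psi : bhom A B) (S : set (St A)) : stone_borel S -> stone_borel (stone_map psi @^-1` S).
Proof.
move: S; apply: smallest_sub; last by move=> O oO; apply: borel_open; exact: open_pre.
split => /=.
- by rewrite preimage_set0; exact: borel0.
- by move=> S bS; rewrite setTD preimage_setC; exact: borelC.
- by move=> F bF; rewrite preimage_bigcup; exact: borel_bigcup.
Qed.

Local Open Scope ring_scope.

Lemma cvg0P (R : realType) (u : nat -> R) :
  u @ \oo --> 0 <-> forall e, 0 < e -> exists N, forall n, (N <= n)%N -> `|u n| < e.
Proof.
rewrite cvgrPdist_lt; split => H e he.
  have [N _ HN] := H e he; exists N => n Nn.
  by have := HN n Nn; rewrite /= sub0r normrN.
have [N HN] := H e he; exists N => // n Nn /=.
by rewrite sub0r normrN; exact: HN.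
Qed.

Section Nu.
Context d (X : ctbDistrLatticeType d) (R : realType) (nu : set (St X) -> R)
  (hnu : radon_measure nu).
Implicit Types S T : set (St X).

Lemma nu_ge0 S : stone_borel S -> 0 <= nu S.
Proof. by case: hnu => H _ _ _; apply: H. Qed.
Lemma nu0 : nu set0 = 0.
Proof. by case: hnu. Qed.

Lemma nu_add S T : stone_borel S -> stone_borel T -> S `&` T = set0 ->
  nu (S `|` T) = nu S + nu T.
Proof.
move=> bS bT ST.
have h : (fun n => \sum_(0 <= i < n) nu (bigcup2 S T i)) @ \oo --> nu (S `|` T).
  rewrite -bigcup2E; case: hnu => _ _ H _; apply: H.
    by move=> [|[|n]] //=; exact: borel0.
  by rewrite -trivIset_bigcup2.
have h2 : (fun n => \sum_(0 <= i < n) nu (bigcup2 S T i)) @ \oo --> nu S + nu T.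
  apply: cvg_near_cst; exists 2%N => // n /= n2.
  rewrite -(subnK n2); elim: (n - 2)%N => [|m IH].
    by rewrite !big_nat_recr //= big_geq // add0r.
  by rewrite addSn big_nat_recr //= IH addn2 /= nu0 addr0.
exact: (cvg_unique _ h h2).
Qed.

Lemma nu_D S T : stone_borel S -> stone_borel T -> S `<=` T ->
  nu (T `\` S) = nu T - nu S.
Proof.
move=> bS bT ST.
have := nu_add bS (borelD bT bS) (setDIK S T).
by rewrite setDUK // => ->; rewrite [nu S + _]addrC addrK.
Qed.

Lemma nu_mono S T : stone_borel S -> stone_borel T -> S `<=` T -> nu S <= nu T.
Proof.
move=> bS bT ST; rewrite -subr_ge0 -nu_D //; apply: nu_ge0; exact: borelD.
Qed.

Lemma nu_subadd S T : stone_borel S -> stone_borel T -> nu (S `|` T) <= nu S + nu T.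
Proof.
move=> bS bT; have SU : S `<=` S `|` T by move=> x; left.
rewrite -(setDUK SU) nu_add //; last 2 first.
- by apply: borelD => //; exact: borelU.
- exact: setDIK.
rewrite lerD2l; apply: nu_mono => //; first by apply: borelD => //; exact: borelU.
by move=> x [[]].
Qed.

Lemma nu_down (E : nat -> set (St X)) : (forall n, stone_borel (E n)) ->
  (forall n, E n.+1 `<=` E n) -> \bigcap_n E n = set0 ->
  (fun n => nu (E n)) @ \oo --> 0.
Proof.
move=> bE Edec Ecap.
have dec : forall m n, (m <= n)%N -> E n `<=` E m.
  move=> m n /subnK <-; elim: (n - m)%N => [|k IH] //=.
  by rewrite addSn; exact: subset_trans (Edec _) IH.
pose F i := E i `\` E i.+1.
have bF i : stone_borel (F i) by apply: borelD.
have tF : trivIset setT F.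
  move=> i j _ _ [x [[Ei nEi1] [Ej nEj1]]].
  case: (ltngtP i j) => // ij.
    by exfalso; apply: nEi1; exact: (dec _ _ ij).
  by exfalso; apply: nEj1; exact: (dec _ _ ij).
have UF : \bigcup_i F i = E 0%N.
  apply/seteqP; split => x.
    by move=> [i _ [Ei _]]; exact: (dec 0%N i).
  move=> E0x.
  have [n nEn] : exists n, ~ E n x.
    apply: contrapT => H; have : (\bigcap_n E n) x.
      by move=> n _; apply: contrapT => nE; apply: H; exists n.
    by rewrite Ecap.
  elim: n nEn => [|n IH] nEn; first by [].
  case: (pselect (E n x)) => Enx; first by exists n.
  exact: IH.
have PS n : \sum_(0 <= i < n) nu (F i) = nu (E 0%N) - nu (E n).
  elim: n => [|n IH]; first by rewrite big_geq // subrr.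
  rewrite big_nat_recr //= IH /F nu_D //.
  by rewrite addrA subrK.
have h : (fun n => nu (E 0%N) - nu (E n)) @ \oo --> nu (E 0%N).
  case: hnu => _ _ H _; have := H F bF tF; rewrite UF.
  suff -> : (fun n => \sum_(0 <= i < n) nu (F i)) = (fun n => nu (E 0%N) - nu (E n)) by [].
  by apply/funext => n; exact: PS.
have -> : (fun n => nu (E n)) = (fun n => nu (E 0%N) - (nu (E 0%N) - nu (E n))).
  by apply/funext => n; rewrite opprB addrCA subrr addr0.
rewrite -(subrr (nu (E 0%N))); apply: cvgB => //; exact: cvg_cst.
Qed.
End Nu.

Lemma symD_incl (Y Z : Type) (f g : Y -> Z) (S T E : set Z) :
  S `<=` T `|` E -> T `<=` S ->
  setSymD (f @^-1` S) (g @^-1` S) `<=`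
  setSymD (f @^-1` T) (g @^-1` T) `|` ((f @^-1` E) `|` (g @^-1` E)).
Proof.
move=> STE TS x [[fS ngS]|[gS nfS]].
  case: (pselect (T (f x))) => fT.
    by left; left; split => // gT; apply: ngS; exact: TS.
  by right; left; case: (STE _ fS).
case: (pselect (T (g x))) => gT.
  by left; right; split => // fT; apply: nfS; exact: TS.
by right; right; case: (STE _ gS).
Qed.

Lemma symD_U (Y Z : Type) (f g : Y -> Z) (S T : set Z) :
  setSymD (f @^-1` (S `|` T)) (g @^-1` (S `|` T)) `<=`
  setSymD (f @^-1` S) (g @^-1` S) `|` setSymD (f @^-1` T) (g @^-1` T).
Proof.
move=> x [[[fS|fT] ng]|[[gS|gT] nf]].
- by left; left; split => // gS; apply: ng; left.
- by right; left; split => // gT; apply: ng; right.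
- by left; right; split => // fS; apply: nf; left.
- by right; right; split => // fT; apply: nf; right.
Qed.

Lemma symD_C (Y : Type) (P Q : set Y) : setSymD (~` P) (~` Q) = setSymD P Q.
Proof.
apply/seteqP; split => x [[a b]|[a b]].
- by right; split => //; apply: contrapT.
- by left; split => //; apply: contrapT.
- by right; split => //= /(_ a).
- by left; split => //= /(_ a).
Qed.

Lemma symD0 (Y : Type) : setSymD (@set0 Y) set0 = set0.
Proof. by apply/seteqP; split => x // [[]|[]]. Qed.

Lemma borel_symD d (X : ctbDistrLatticeType d) (P Q : set (St X)) :
  stone_borel P -> stone_borel Q -> stone_borel (setSymD P Q).
Proof. by move=> bP bQ; apply: borelU; apply: borelD. Qed.

Section Main.
Context (R : realType) (dA dB : Order.disp_t)
  (A : ctbDistrLatticeType dA) (B : ctbDistrLatticeType dB)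
  (mu : B -> R) (nu : set (St B) -> R)
  (phis : nat -> bhom A B) (phi : bhom A B)
  (hrad : radon_measure nu) (hclop : forall b, nu (clop b) = mu b)
  (hunif : unif_ctbl_additive (fun n => pushforward_m nu (stone_map (phis n)))).

Lemma single_reg (psi : bhom A B) (U : set (St A)) : stone_open U ->
  forall e : R, 0 < e -> exists c, clop c `<=` U /\
    nu (stone_map psi @^-1` (U `\` clop c)) < e.
Proof.
move=> oU e e0.
have bE : stone_borel (stone_map psi @^-1` U) by apply: borel_pre; exact: borel_open.
have [K [cK KE hK]] : exists K, [/\ stone_compact K, K `<=` stone_map psi @^-1` U &
    nu (stone_map psi @^-1` U) - e < nu K].
  by case: hrad => _ _ _ H; apply: H.
pose P b := exists a, clop a `<=` U /\ b = psi a.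
have cov : K `<=` \bigcup_(b in P) clop b.
  move=> y /KE /oU [a [ya aU]]; exists (psi a) => //; by exists a.
have P0 : P Order.bottom by exists Order.bottom; rewrite clop_bot hom_bot; split.
have PU : forall a b, P a -> P b -> P (Order.join a b).
  move=> _ _ [a [aU ->]] [b [bU ->]]; exists (Order.join a b).
  by rewrite clop_join hom_join; split => // x [/aU|/bU].
have [_ [[c [cU ->]] Kc]] := cover_clop cK cov P0 PU.
exists c; split => //.
have sub : clop (psi c) `<=` stone_map psi @^-1` U by move=> y yc; apply: cU.
have -> : stone_map psi @^-1` (U `\` clop c) = stone_map psi @^-1` U `\` clop (psi c) by [].
rewrite nu_D //; last exact: borel_clop.
have : nu K <= nu (clop (psi c)).
  by apply: nu_mono => //; [exact: borel_compact|exact: borel_clop].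
lra.
Qed.

Local Notation f n := (stone_map (phis n)).
Local Notation g := (stone_map phi).

Lemma unif_reg (U : set (St A)) : stone_open U ->
  forall e : R, 0 < e -> exists c, clop c `<=` U /\
    forall n, nu (f n @^-1` (U `\` clop c)) < e.
Proof.
move=> oU e e0; apply: contrapT => H.
have H' : forall c, clop c `<=` U -> exists n, e <= nu (f n @^-1` (U `\` clop c)).
  move=> c cU; apply: contrapT => H2; apply: H; exists c; split => // n.
  rewrite ltNge; apply/negP => Hn; apply: H2; by exists n.
have bU : stone_borel U by exact: borel_open.
have e2 : 0 < e / 2 by rewrite divr_gt0.
have step : forall c, exists c', clop c `<=` U ->
   [/\ clop c' `<=` U, (c <= c')%O &
    exists n, e / 2 < nu (f n @^-1` (clop c' `\` clop c))].
  move=> c; case: (pselect (clop c `<=` U)) => cU; last by exists c.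
  have [n hn] := H' c cU.
  have [c1 [c1U hc1]] := single_reg (phis n) oU e2.
  exists (Order.join c c1) => _; split.
  - by rewrite clop_join => x [/cU|/c1U].
  - exact: leUl.
  exists n.
  have incl : f n @^-1` (U `\` clop c) `<=`
      f n @^-1` (clop (Order.join c c1) `\` clop c) `|` f n @^-1` (U `\` clop c1).
    move=> x [Ux ncx]; case: (pselect (clop c1 (f n x))) => c1x.
      by left; split => //; rewrite clop_join; right.
    by right.
  have b1 : stone_borel (f n @^-1` (clop (Order.join c c1) `\` clop c)).
    by apply: borel_pre; apply: borelD; exact: borel_clop.
  have b2 : stone_borel (f n @^-1` (U `\` clop c1)).
    by apply: borel_pre; apply: borelD => //; exact: borel_clop.
  have b3 : stone_borel (f n @^-1` (U `\` clop c)).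
    by apply: borel_pre; apply: borelD => //; exact: borel_clop.
  have h1 := nu_mono hrad b3 (borelU b1 b2) incl.
  have h2 := nu_subadd hrad b1 b2.
  lra.
have [gg hg] := choice step.
pose cs k := iter k gg Order.bottom.
have csU : forall k, clop (cs k) `<=` U.
  elim => [|k IH]; first by rewrite /cs /= clop_bot.
  by have [] := hg (cs k) IH.
have csinc : forall k, clop (cs k) `<=` clop (cs k.+1).
  move=> k x xk; have [_ le _] := hg (cs k) (csU k).
  exact: uf_up xk le.
pose V := \bigcup_j clop (cs j).
pose E k := V `\` clop (cs k).
have bE : forall k, stone_borel (E k).
  move=> k; apply: borelD; last exact: borel_clop.
  by apply: borel_bigcup => j; exact: borel_clop.
have Edec : forall k, E k.+1 `<=` E k.
  by move=> k x [Vx nx]; split => // xk; apply: nx; exact: csinc.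
have Ecap : \bigcap_k E k = set0.
  apply/seteqP; split => x // Hx.
  have [Vx _] := Hx 0%N I; case: Vx => j _ xj.
  by have [_ /(_ xj)] := Hx j I.
have [N HN] := hunif bE Edec Ecap e2.
have [_ _ [n hn]] := hg (cs N) (csU N).
have HNn := HN N n (leqnn N).
rewrite /pushforward_m in HNn.
have : nu (f n @^-1` (clop (cs N.+1) `\` clop (cs N))) <= nu (f n @^-1` E N).
  apply: nu_mono => //; first by apply: borel_pre; apply: borelD; exact: borel_clop.
    exact: borel_pre.
  move=> x [x1 x0]; split => //; by exists N.+1.
have := ler_norm (nu (f n @^-1` E N)).
lra.
Qed.

Lemma main_lemma : pw_metric_cvg mu phis phi -> pw_borel_metric_cvg nu phis phi.
Proof.
move=> hpw.
pose q S n := nu (setSymD (f n @^-1` S) (g @^-1` S)).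
pose D := [set S | stone_borel S /\ (fun n => q S n) @ \oo --> 0].
have q0 : forall S, stone_borel S -> forall n, 0 <= q S n.
  by move=> S bS n; apply: (nu_ge0 hrad); apply: borel_symD; exact: borel_pre.
have bound : forall S T E, stone_borel S -> stone_borel T -> stone_borel E ->
    S `<=` T `|` E -> T `<=` S ->
    forall n, q S n <= q T n + (nu (f n @^-1` E) + nu (g @^-1` E)).
  move=> S T E bS bT bE STE TS n.
  have b1 : stone_borel (setSymD (f n @^-1` T) (g @^-1` T)).
    by apply: borel_symD; exact: borel_pre.
  have b2 : stone_borel (f n @^-1` E) by exact: borel_pre.
  have b3 : stone_borel (g @^-1` E) by exact: borel_pre.
  have h1 := nu_mono hrad (borel_symD (borel_pre (phis n) bS) (borel_pre phi bS))
    (borelU b1 (borelU b2 b3)) (symD_incl (f:=f n) (g:=g) STE TS).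
  have h2 := nu_subadd hrad b1 (borelU b2 b3).
  have h3 := nu_subadd hrad b2 b3.
  rewrite /q; lra.
have D0 : D set0.
  split; first exact: borel0.
  have -> : (fun n => q set0 n) = fun _ => 0.
    by apply/funext => n; rewrite /q !preimage_set0 symD0 nu0.
  apply: cvg_cst.
have DC : forall S, D S -> D (~` S).
  move=> S [bS hS]; split; first exact: borelC.
  have -> : (fun n => q (~` S) n) = (fun n => q S n).
    have pC : forall h : St B -> St A, h @^-1` (~` S) = ~` (h @^-1` S) by [].
    by apply/funext => n; rewrite /q !pC symD_C.
  exact: hS.
have DU : forall S T, D S -> D T -> D (S `|` T).
  move=> S T [bS hS] [bT hT]; split; first exact: borelU.
  apply/cvg0P => e e0.
  have e2 : 0 < e / 2 by rewrite divr_gt0.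
  have [N1 H1] := (cvg0P _).1 hS _ e2.
  have [N2 H2] := (cvg0P _).1 hT _ e2.
  exists (maxn N1 N2) => n Nn.
  have := H1 n (leq_trans (leq_maxl _ _) Nn).
  have := H2 n (leq_trans (leq_maxr _ _) Nn).
  rewrite /= (ger0_norm (q0 _ (borelU bS bT) n)) (ger0_norm (q0 _ bS n)) (ger0_norm (q0 _ bT n)).
  have b1 : stone_borel (setSymD (f n @^-1` S) (g @^-1` S)).
    by apply: borel_symD; exact: borel_pre.
  have b2 : stone_borel (setSymD (f n @^-1` T) (g @^-1` T)).
    by apply: borel_symD; exact: borel_pre.
  have h1 := nu_mono hrad (borel_symD (borel_pre (phis n) (borelU bS bT))
    (borel_pre phi (borelU bS bT))) (borelU b1 b2) (symD_U (f:=f n) (g:=g) (S:=S) (T:=T)).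
  have h2 := nu_subadd hrad b1 b2.
  rewrite /q; lra.
suff: @stone_borel _ A `<=` D by move=> H S /H [].
apply: smallest_sub; last first.
  move=> U oU; split; first exact: borel_open.
  apply/cvg0P => e e0.
  have e3 : 0 < e / 3 by rewrite divr_gt0.
  have [c [cU hc]] := unif_reg oU e3.
  have [c' [c'U hc']] := single_reg phi oU e3.
  pose b := Order.join c c'.
  have CU : clop b `<=` U by rewrite /b clop_join => x [/cU|/c'U].
  have bU : stone_borel U by exact: borel_open.
  have bE : stone_borel (U `\` clop b) by apply: borelD => //; exact: borel_clop.
  have qC : forall n, q (clop b) n = d_mu mu (phis n b) (phi b).
    by move=> n; rewrite /q !stone_map_clop -clop_symd hclop.
  have [L HL] := (cvg0P _).1 (hpw b) _ e3.
  exists L => n Ln.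
  have := HL n Ln; rewrite -qC.
  have := bound U (clop b) (U `\` clop b) bU (borel_clop _) bE _ CU n.
  have Hb : U `<=` clop b `|` (U `\` clop b).
    by move=> x Ux; case: (pselect (clop b x)) => bx; [left|right].
  move=> /(_ Hb) hb.
  have m1 : nu (f n @^-1` (U `\` clop b)) <= nu (f n @^-1` (U `\` clop c)).
    apply: nu_mono => //; try exact: borel_pre.
      by apply: borel_pre; apply: borelD => //; exact: borel_clop.
    by move=> x [Ux nbx]; split => // cx; apply: nbx; rewrite /b clop_join; left.
  have m2 : nu (g @^-1` (U `\` clop b)) <= nu (g @^-1` (U `\` clop c')).
    apply: nu_mono => //; try exact: borel_pre.
      by apply: borel_pre; apply: borelD => //; exact: borel_clop.
    by move=> x [Ux nbx]; split => // cx; apply: nbx; rewrite /b clop_join; right.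
  have := hc n.
  rewrite /= (ger0_norm (q0 _ bU n)) (ger0_norm (q0 _ (borel_clop b) n)).
  lra.
split.
- exact: D0.
- by move=> S /DC; rewrite setTD.
move=> F hF.
pose T k := \bigcup_(i in [set i | (i < k)%N]) F i.
have TS : forall k, T k.+1 = T k `|` F k.
  move=> k; apply/seteqP; split => x.
    move=> [i /= ik Fi]; move: ik; rewrite ltnS leq_eqVlt => /orP [/eqP ik|ik].
      by right; rewrite -ik.
    by left; exists i.
  case => [[i /= ik Fi]|Fk]; first by exists i => //=; exact: ltnW.
  by exists k => //=.
have DT : forall k, D (T k).
  elim => [|k IH].
    have -> : T 0%N = set0 by apply/seteqP; split => x // [i].
    exact: D0.
  by rewrite TS; apply: DU.
pose S := \bigcup_k F k.
have bS : stone_borel S by apply: borel_bigcup => k; case: (hF k).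
pose E k := S `\` T k.
have bT : forall k, stone_borel (T k) by move=> k; case: (DT k).
have bE : forall k, stone_borel (E k) by move=> k; exact: borelD.
have Edec : forall k, E k.+1 `<=` E k.
  by move=> k x [Sx nT]; split => // Tx; apply: nT; rewrite TS; left.
have Ecap : \bigcap_k E k = set0.
  apply/seteqP; split => x // Hx.
  have [Sx _] := Hx 0%N I; case: Sx => i _ Fi.
  by have [_] := Hx i.+1 I; apply; rewrite TS; right.
split => //.
apply/cvg0P => e e0.
have e3 : 0 < e / 3 by rewrite divr_gt0.
have [N HN] := hunif bE Edec Ecap e3.
have hg : (fun k => nu (g @^-1` E k)) @ \oo --> 0.
  apply: (nu_down hrad).
  - by move=> k; exact: borel_pre.
  - by move=> k x; exact: Edec.
  - apply/seteqP; split => x // Hx.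
    have : (\bigcap_k E k) (g x) by move=> k _; exact: Hx k I.
    by rewrite Ecap.
have [M HM] := (cvg0P _).1 hg _ e3.
pose k := maxn N M.
have [L HL] := (cvg0P _).1 (DT k).2 _ e3.
exists L => n Ln.
have := HL n Ln.
have := HM k (leq_maxr _ _).
have := HN k n (leq_maxl _ _).
rewrite /pushforward_m.
have hb := bound S (T k) (E k) bS (bT k) (bE k) _ _ n.
have Hb1 : S `<=` T k `|` E k.
  by move=> x Sx; case: (pselect (T k x)) => Tx; [left|right].
have Hb2 : T k `<=` S by move=> x [i _ Fi]; exists i.
have {hb} hb := hb Hb1 Hb2.
have := ler_norm (nu (f n @^-1` E k)).
have := ler_norm (nu (g @^-1` E k)).
rewrite /= (ger0_norm (q0 _ bS n)) (ger0_norm (q0 _ (bT k) n)).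
lra.
Qed.

End Main.

Theorem proposition5p4 (R : realType) (dA dB : Order.disp_t)
  (A : ctbDistrLatticeType dA) (B : ctbDistrLatticeType dB)
  (mu : B -> R) (nu : set (St B) -> R)
  (phis : nat -> bhom A B) (phi : bhom A B) :
  metric_ba mu ->
  radon_extension mu nu ->
  pw_metric_cvg mu phis phi ->
  unif_ctbl_additive (fun n => pushforward_m nu (stone_map (phis n))) ->
  pw_borel_metric_cvg nu phis phi.
Proof.
move=> _ [hrad hclop] hpw hunif.
exact: (main_lemma hrad hclop hunif hpw).
Qed.
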